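(* Under the standing assumptions below, for every $k\ge1$, with $\widetilde{X'_k}(1)=-\sum_{j=1}^{k}a_jX_{k+1-j}$, $$\mathbb{E}\big[(X_{k+1}-\widetilde{X'_k}(1))^2\big]=\sigma_\varepsilon^2+\sum_{j=k+1}^{\infty}\sum_{l=k+1}^{\infty}a_ja_l\,\sigma(l-j),$$ where the double series converges absolutely.
   Context: Standing assumptions. Let $(X_n)_{n\in\mathbb Z}$ be a real, zero-mean, weakly stationary process in $L^2$ with autocovariance function $\sigma(j)=\mathbb E[X_nX_{n+j}]$, satisfying $\sum_{j\in\mathbb Z}|\sigma(j)|=\infty$. Assume $X_n=\sum_{j\ge0}b_j\varepsilon_{n-j}$ (convergence in $L^2$). Here $(\varepsilon_n)_{n\in\mathbb Z}$ is a sequence of uncorrelated random variables with mean $0$ and variance $\sigma_\varepsilon^2>0$, and $b_0=1$, $\sum_j b_j^2<\infty$. Assume also $\varepsilon_n=\sum_{j\ge0}a_jX_{n-j}$ with $a_0=1$ and $\sum_j|a_j|<\infty$. The power series $A(z)=\sum_{j\ge0}a_jz^j$ and $B(z)=\sum_{j\ge0}b_jz^j$ satisfy $A(z)B(z)=1$ for $|z|\le1$. Fix $d\in(0,1/2)$. Assume that for every $\delta>0$ there exist constants $C_1,C_2$ (depending on $\delta$) such that $|a_j|\le C_1j^{-d-1+\delta}$ and $|b_j|\le C_2j^{d-1+\delta}$ for all $j\ge1$. *)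

(* Defs.v *)
From Stdlib Require Export Reals ZArith.
Open Scope R_scope.

(* Second-order (L^2) setting.  A real vector space of random variables     *)
(* with the (semi-)inner product (X,Y) |-> E[XY].  The space of all square-  *)
(* integrable random variables on a probability space is an instance.       *)
Record L2Space := {
  rv :> Type;
  vzero : rv;
  vadd : rv -> rv -> rv;
  vscal : R -> rv -> rv;
  E2 : rv -> rv -> R;
  vadd_assoc : forall x y z, vadd x (vadd y z) = vadd (vadd x y) z;
  vadd_comm : forall x y, vadd x y = vadd y x;
  vadd_0 : forall x, vadd vzero x = x;
  vadd_opp : forall x, vadd x (vscal (-1) x) = vzero;
  vscal_1 : forall x, vscal 1 x = x;
  vscal_assoc : forall a b x, vscal a (vscal b x) = vscal (a * b) x;
  vscal_addr : forall a x y, vscal a (vadd x y) = vadd (vscal a x) (vscal a y);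
  vscal_addl : forall a b x, vscal (a + b) x = vadd (vscal a x) (vscal b x);
  E2_sym : forall x y, E2 x y = E2 y x;
  E2_addl : forall x y z, E2 (vadd x y) z = E2 x z + E2 y z;
  E2_scall : forall a x y, E2 (vscal a x) y = a * E2 x y;
  E2_pos : forall x, 0 <= E2 x x
}.

Arguments vzero {_}. Arguments vadd {_}. Arguments vscal {_}. Arguments E2 {_}.

Definition vsub {V : L2Space} (x y : V) : V := vadd x (vscal (-1) y).
Definition vopp {V : L2Space} (x : V) : V := vscal (-1) x.

Fixpoint vsum {V : L2Space} (f : nat -> V) (n : nat) : V :=
  match n with
  | O => vzero
  | S m => vadd (vsum f m) (f m)
  end.

Definition L2_series {V : L2Space} (f : nat -> V) (x : V) : Prop :=
  Un_cv (fun n => E2 (vsub x (vsum f n)) (vsub x (vsum f n))) 0.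

(* sum_{j in Z} |s j| = infinity: the symmetric partial sums are unbounded *)
Definition Z_abs_sum_infinite (s : Z -> R) : Prop :=
  forall M : R, exists N : nat,
    sum_f_R0 (fun i => Rabs (s (Z.of_nat i - Z.of_nat N)%Z)) (2 * N) > M.

Definition Cx := (R * R)%type.
Definition Cmul (z w : Cx) : Cx :=
  (fst z * fst w - snd z * snd w, fst z * snd w + snd z * fst w).
Fixpoint Cpow (z : Cx) (n : nat) : Cx :=
  match n with O => (1, 0) | S m => Cmul (Cpow z m) z end.
Definition Cmod (z : Cx) : R := sqrt (fst z ^ 2 + snd z ^ 2).

Definition pseries_cv (c : nat -> R) (z : Cx) (l : Cx) : Prop :=
  Un_cv (fun n => sum_f_R0 (fun j => c j * fst (Cpow z j)) n) (fst l) /\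
  Un_cv (fun n => sum_f_R0 (fun j => c j * snd (Cpow z j)) n) (snd l).

(* Main.v *)
Require Import Defs.
From Stdlib Require Import Reals Lra Lia Psatz ZArith Arith.
Open Scope R_scope.

Fixpoint rsum (f : nat -> R) (n : nat) : R :=
  match n with O => 0 | S m => rsum f m + f m end.

Lemma rsum_ext f g n : (forall i, (i < n)%nat -> f i = g i) -> rsum f n = rsum g n.
Proof. induction n; intros H; simpl; auto. rewrite IHn; [rewrite H|]; auto; intros; apply H; lia. Qed.

Lemma rsum_sumf f n : rsum f (S n) = sum_f_R0 f n.
Proof. induction n. simpl; ring. change (rsum f (S (S n))) with (rsum f (S n) + f (S n)). rewrite IHn. simpl. ring. Qed.

Lemma rsum_split f m n : rsum f (m + n) = rsum f m + rsum (fun i => f (m + i)%nat) n.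
Proof. induction n; simpl. rewrite Nat.add_0_r; ring. rewrite Nat.add_succ_r; simpl; rewrite IHn; ring. Qed.

Lemma rsum_plus f g n : rsum (fun i => f i + g i) n = rsum f n + rsum g n.
Proof. induction n; simpl; [ring|rewrite IHn; ring]. Qed.
Lemma rsum_scal c f n : rsum (fun i => c * f i) n = c * rsum f n.
Proof. induction n; simpl; [ring|rewrite IHn; ring]. Qed.
Lemma rsum_zero n : rsum (fun _ => 0) n = 0.
Proof. induction n; simpl; [ring|rewrite IHn; ring]. Qed.
Lemma rsum_abs f n : Rabs (rsum f n) <= rsum (fun i => Rabs (f i)) n.
Proof. induction n; simpl. rewrite Rabs_R0; lra. eapply Rle_trans; [apply Rabs_triang|lra]. Qed.
Lemma rsum_le f g n : (forall i, f i <= g i) -> rsum f n <= rsum g n.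
Proof. intros H; induction n; simpl; [lra|specialize (H n); lra]. Qed.
Lemma rsum_nonneg f n : (forall i, 0 <= f i) -> 0 <= rsum f n.
Proof. intros H; induction n; simpl; [lra|specialize (H n); lra]. Qed.

Definition cv f l := Un_cv (fun n => rsum f n) l.

Lemma cv_inf f l : cv f l -> infinite_sum f l.
Proof. intros H e He. destruct (H e He) as [N HN]. exists N. intros n Hn.
  rewrite <- rsum_sumf. apply HN. lia. Qed.
Lemma inf_cv f l : infinite_sum f l -> cv f l.
Proof. intros H e He. destruct (H e He) as [N HN]. exists (S N). intros n Hn.
  destruct n. lia. rewrite rsum_sumf. apply HN. lia. Qed.

Lemma Un_cv_shift u l m : Un_cv u l -> Un_cv (fun n => u (m + n)%nat) l.
Proof. intros H e He. destruct (H e He) as [N HN]. exists N. intros n Hn. apply HN. lia. Qed.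

Lemma cv_shift f l m : cv f l -> cv (fun i => f (m + i)%nat) (l - rsum f m).
Proof. intros H. unfold cv. 
  assert (H2 := Un_cv_shift _ _ m H).
  intros e He. destruct (H2 e He) as [N HN]. exists N. intros n Hn.
  specialize (HN n Hn). unfold Rdist in *. rewrite rsum_split in HN.
  replace (rsum (fun i => f (m + i)%nat) n - (l - rsum f m)) with (rsum f m + rsum (fun i : nat => f (m + i)%nat) n - l) by ring. auto. Qed.

Lemma rsum_diff_le g h m p : (forall i, Rabs (g i) <= h i) ->
  Rabs (rsum g (m + p) - rsum g m) <= rsum h (m + p) - rsum h m.
Proof. intros H. rewrite !rsum_split.
  replace (rsum g m + rsum (fun i => g (m + i)%nat) p - rsum g m) with (rsum (fun i => g (m + i)%nat) p) by ring.
  replace (rsum h m + rsum (fun i => h (m + i)%nat) p - rsum h m) with (rsum (fun i => h (m + i)%nat) p) by ring.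
  eapply Rle_trans; [apply rsum_abs|]. apply rsum_le. intros; apply H. Qed.

Lemma cv_comp g h L : (forall i, Rabs (g i) <= h i) -> cv h L -> {l | cv g l}.
Proof. intros H HL.
  assert (C : Cauchy_crit (fun n => rsum h n)) by (apply CV_Cauchy; exists L; exact HL).
  assert (C2 : Cauchy_crit (fun n => rsum g n)).
  { intros e He. destruct (C e He) as [N HN]. exists N. intros n m Hn Hm.
    unfold Rdist in *.
    destruct (le_lt_dec m n) as [Hmn|Hmn].
    - replace n with (m + (n - m))%nat by lia. specialize (HN (m + (n-m))%nat m ltac:(lia) Hm).
      eapply Rle_lt_trans; [apply (rsum_diff_le g h); auto|]. eapply Rle_lt_trans; [apply Rle_abs|exact HN].
    - replace m with (n + (m - n))%nat by lia. specialize (HN n (n + (m-n))%nat Hn ltac:(lia)).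
      rewrite Rabs_minus_sym. rewrite Rabs_minus_sym in HN.
      eapply Rle_lt_trans; [apply (rsum_diff_le g h); auto|]. eapply Rle_lt_trans; [apply Rle_abs|exact HN]. }
  exact (R_complete _ C2). Qed.

Lemma lim_bound u l x B N : Un_cv u l -> (forall n, (n >= N)%nat -> Rabs (u n - x) <= B) -> Rabs (l - x) <= B.
Proof. intros H HB. apply Rnot_lt_le. intros Hc.
  set (e := Rabs (l - x) - B). assert (He : e > 0) by (unfold e; lra).
  destruct (H e He) as [N1 HN1]. specialize (HN1 (max N N1) ltac:(lia)). specialize (HB (max N N1) ltac:(lia)).
  unfold Rdist in HN1. assert (T := Rabs_triang (l - u (max N N1)) (u (max N N1) - x)).
  replace (l - u (max N N1) + (u (max N N1) - x)) with (l - x) in T by ring.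
  rewrite Rabs_minus_sym in HN1. unfold e in *. lra. Qed.

Lemma cv_le_lim h L n : (forall i, 0 <= h i) -> cv h L -> rsum h n <= L.
Proof. intros Hp H. apply Rnot_lt_le; intros Hc.
  set (e := rsum h n - L). assert (He : e > 0) by (unfold e; lra).
  destruct (H e He) as [N HN]. specialize (HN (n + N)%nat ltac:(lia)).
  rewrite rsum_split in HN. assert (0 <= rsum (fun i => h (n + i)%nat) N) by (apply rsum_nonneg; auto).
  unfold Rdist, e in *. apply Rabs_def2 in HN. lra. Qed.

Lemma cv_scal c f l : cv f l -> cv (fun i => c * f i) (c * l).
Proof. intros H. unfold cv. intros e He. destruct (Req_dec c 0) as [Hc|Hc].
  - exists O. intros n _. rewrite rsum_scal, Hc. unfold Rdist. rewrite !Rmult_0_l, Rminus_0_r, Rabs_R0. lra.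
  - destruct (H (e / Rabs c)) as [N HN]. apply Rdiv_lt_0_compat; [lra|apply Rabs_pos_lt; auto].
    exists N. intros n Hn. specialize (HN n Hn). unfold Rdist in *. rewrite rsum_scal.
    rewrite <- Rmult_minus_distr_l, Rabs_mult.
    assert (0 < Rabs c) by (apply Rabs_pos_lt; auto).
    apply (Rmult_lt_compat_l (Rabs c)) in HN; auto. field_simplify in HN; lra. Qed.

Lemma lim_le u l B : Un_cv u l -> (forall n, u n <= B) -> l <= B.
Proof. intros H HB. apply Rnot_lt_le; intros Hc. destruct (H (l - B) ltac:(lra)) as [N HN].
  specialize (HN N (le_n _)). specialize (HB N). unfold Rdist in HN. apply Rabs_def2 in HN. lra. Qed.
Lemma lim_ge u l B : Un_cv u l -> (forall n, B <= u n) -> B <= l.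
Proof. intros H HB. apply Rnot_lt_le; intros Hc. destruct (H (B - l) ltac:(lra)) as [N HN].
  specialize (HN N (le_n _)). specialize (HB N). unfold Rdist in HN. apply Rabs_def2 in HN. lra. Qed.

Lemma squeeze v w : (forall n, Rabs (v n) <= w n) -> Un_cv w 0 -> Un_cv v 0.
Proof. intros H Hw e He. destruct (Hw e He) as [N HN]. exists N. intros n Hn.
  specialize (HN n Hn). specialize (H n). unfold Rdist in *. rewrite Rminus_0_r in *.
  eapply Rle_lt_trans; [exact H|]. eapply Rle_lt_trans; [apply Rle_abs|exact HN]. Qed.

Arguments E2_sym {_}. Arguments E2_addl {_}. Arguments E2_scall {_}. Arguments E2_pos {_}. Arguments vadd_assoc {_}. Arguments vadd_comm {_}. Arguments vadd_0 {_}. Arguments vadd_opp {_}. Arguments vscal_1 {_}. Arguments vscal_assoc {_}. Arguments vscal_addr {_}. Arguments vscal_addl {_}.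
Section V.
Variable V : L2Space.

Lemma vscal0 (x : V) : vscal 0 x = vzero.
Proof. replace 0 with (1 + -1) by ring. rewrite vscal_addl, vscal_1. apply vadd_opp. Qed.
Lemma E2_zl (y : V) : E2 vzero y = 0.
Proof. rewrite <- (vscal0 vzero). rewrite E2_scall. ring. Qed.
Lemma E2_addr (x y z : V) : E2 z (vadd x y) = E2 z x + E2 z y.
Proof. rewrite E2_sym, E2_addl, (E2_sym x), (E2_sym y). auto. Qed.
Lemma E2_scalr a (x y : V) : E2 y (vscal a x) = a * E2 y x.
Proof. rewrite E2_sym, E2_scall, E2_sym. auto. Qed.
Lemma E2_subl (x y z : V) : E2 (vsub x y) z = E2 x z - E2 y z.
Proof. unfold vsub. rewrite E2_addl, E2_scall. ring. Qed.
Lemma E2_subr (x y z : V) : E2 z (vsub x y) = E2 z x - E2 z y.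
Proof. rewrite E2_sym, E2_subl, !(E2_sym z). auto. Qed.
Lemma E2_vsuml (g : nat -> V) n y : E2 (vsum g n) y = rsum (fun i => E2 (g i) y) n.
Proof. induction n; simpl. apply E2_zl. rewrite E2_addl, IHn. auto. Qed.
Lemma E2_vsumr (g : nat -> V) n y : E2 y (vsum g n) = rsum (fun i => E2 y (g i)) n.
Proof. rewrite E2_sym, E2_vsuml. apply rsum_ext. intros; apply E2_sym. Qed.
Lemma vsum_ext (f g : nat -> V) n : (forall i, f i = g i) -> vsum f n = vsum g n.
Proof. intros H; induction n; simpl; auto. rewrite IHn, H. auto. Qed.
Lemma vsum_split (f : nat -> V) m n : vsum f (m + n) = vadd (vsum f m) (vsum (fun i => f (m + i)%nat) n).
Proof. induction n; simpl. rewrite Nat.add_0_r, vadd_comm, vadd_0. auto.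
  rewrite Nat.add_succ_r; simpl. rewrite IHn, vadd_assoc. auto. Qed.

Lemma quad (x y : V) al be : 0 <= al*al*E2 x x + 2*al*be*E2 x y + be*be*E2 y y.
Proof. assert (H := E2_pos (vadd (vscal al x) (vscal be y))).
  rewrite E2_addl, !E2_addr, !E2_scall, !E2_scalr, (E2_sym y x) in H. nra. Qed.

Lemma cs_bound (x y : V) t : 0 < t -> 2 * t * Rabs (E2 x y) <= E2 x x + t*t*E2 y y.
Proof. intros Ht. assert (H1 := quad x y 1 t). assert (H2 := quad x y 1 (-t)).
  unfold Rabs; destruct (Rcase_abs _); nra. Qed.

Lemma cont (e : nat -> V) y : Un_cv (fun n => E2 (e n) (e n)) 0 -> Un_cv (fun n => E2 (e n) y) 0.
Proof. intros H eps Heps.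
  assert (Hy := E2_pos y).
  set (t := eps / (E2 y y + 1)).
  assert (Ht : 0 < t) by (unfold t; apply Rdiv_lt_0_compat; lra).
  assert (Hty : t * E2 y y < eps) by (unfold t; apply (Rmult_lt_reg_r (E2 y y + 1)); [lra|];
     field_simplify; [nra|lra]).
  destruct (H (eps * t) ltac:(nra)) as [N HN]. exists N. intros n Hn. specialize (HN n Hn).
  unfold Rdist in *. rewrite Rminus_0_r in *.
  assert (Hp := E2_pos (e n)). rewrite Rabs_right in HN by lra.
  assert (C := cs_bound (e n) y t Ht).
  assert (2 * t * Rabs (E2 (e n) y) < 2 * t * eps) by nra. nra. Qed.

Lemma cont_r (e : nat -> V) y : Un_cv (fun n => E2 (e n) (e n)) 0 -> Un_cv (fun n => E2 y (e n)) 0.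
Proof. intros H. assert (H2 := cont e y H). intros eps He. destruct (H2 eps He) as [N HN]. exists N.
  intros n Hn. rewrite E2_sym. apply HN; auto. Qed.
End V.

Theorem mainTheorem3
  (V : L2Space) (X eps : Z -> V) (sigma : Z -> R) (s2 : R)
  (a b : nat -> R) (d : R)
  (* weak stationarity, autocovariance sigma(j) = E[X_n X_{n+j}] *)
  (Hstat : forall n j : Z, E2 (X n) (X (n + j)%Z) = sigma j)
  (Hlong : Z_abs_sum_infinite sigma)
  (* innovations: uncorrelated, variance s2 > 0 *)
  (Hs2 : 0 < s2)
  (Heps_var : forall n : Z, E2 (eps n) (eps n) = s2)
  (Heps_unc : forall n m : Z, n <> m -> E2 (eps n) (eps m) = 0)
  (* MA(infinity) representation *)
  (Hb0 : b 0%nat = 1)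
  (Hb2 : exists l, infinite_sum (fun j => b j ^ 2) l)
  (HMA : forall n : Z, L2_series (fun j => vscal (b j) (eps (n - Z.of_nat j)%Z)) (X n))
  (* AR(infinity) representation *)
  (Ha0 : a 0%nat = 1)
  (Ha1 : exists l, infinite_sum (fun j => Rabs (a j)) l)
  (HAR : forall n : Z, L2_series (fun j => vscal (a j) (X (n - Z.of_nat j)%Z)) (eps n))
  (* A(z) B(z) = 1 on the closed unit disc (wherever both series converge) *)
  (HAB : forall z la lb, Cmod z <= 1 -> pseries_cv a z la -> pseries_cv b z lb ->
           Cmul la lb = (1, 0))
  (* long-memory parameter and coefficient bounds *)
  (Hd : 0 < d < 1 / 2)
  (Hcoef : forall delta, 0 < delta -> exists C1 C2 : R, forall j : nat, (1 <= j)%nat ->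
      Rabs (a j) <= C1 * Rpower (INR j) (- d - 1 + delta) /\
      Rabs (b j) <= C2 * Rpower (INR j) (d - 1 + delta)) :
  forall k : nat, (1 <= k)%nat ->
    let Xpred : V :=
      vopp (vsum (fun i => vscal (a (i + 1)%nat) (X (Z.of_nat k + 1 - Z.of_nat (i + 1))%Z)) k) in
    let err : V := vsub (X (Z.of_nat k + 1)%Z) Xpred in
    let term := fun i m : nat =>
      a (k + 1 + i)%nat * a (k + 1 + m)%nat
        * sigma (Z.of_nat (k + 1 + m) - Z.of_nat (k + 1 + i))%Z in
    (* absolute convergence of the double series sum_{j>k} sum_{l>k} *)
    (exists T : nat -> R, (forall i, infinite_sum (fun m => Rabs (term i m)) (T i))
                          /\ exists t, infinite_sum T t) /\
    (* value *)
    (exists (S : nat -> R) (D : R),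
        (forall i, infinite_sum (fun m => term i m) (S i)) /\
        infinite_sum S D /\
        E2 err err = s2 + D).
Proof.
  intros k Hk Xpred err term.
  assert (cov : forall p q, E2 (X p) (X q) = sigma (p - q)%Z).
  { intros p q. rewrite E2_sym. rewrite <- (Hstat q (p - q)%Z). f_equal. f_equal. ring. }
  assert (K0 : forall j, Rabs (sigma j) <= sigma 0%Z).
  { intros j. assert (H1 := quad V (X 0%Z) (X j) 1 1). assert (H2 := quad V (X 0%Z) (X j) 1 (-1)).
    rewrite !cov in H1, H2. replace (0 - 0)%Z with 0%Z in * by ring. replace (j - j)%Z with 0%Z in * by ring.
    replace (0 - j)%Z with (- j)%Z in * by ring.
    assert (E : sigma (- j)%Z = sigma j). { replace (- j)%Z with (0 - j)%Z by ring. rewrite <- cov, E2_sym, cov. f_equal. ring. }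
    rewrite E in H1, H2. unfold Rabs; destruct (Rcase_abs _); nra. }
  set (K := sigma 0%Z).
  assert (HK : 0 <= K). { specialize (K0 0%Z). pose proof (Rabs_pos (sigma 0%Z)). unfold K; lra. }
  assert (orth : forall n m, (m < n)%Z -> E2 (eps n) (X m) = 0).
  { intros n m Hmn. specialize (HMA m). unfold L2_series in HMA.
    set (g := fun j => vscal (b j) (eps (m - Z.of_nat j)%Z)) in HMA.
    assert (C := cont_r V _ (eps n) HMA). simpl in C.
    assert (Hc : forall N, E2 (eps n) (vsub (X m) (vsum g N)) = E2 (eps n) (X m)).
    { intros N. rewrite E2_subr, E2_vsumr. rewrite (rsum_ext _ (fun _ => 0)). rewrite rsum_zero. ring.
      intros i _. unfold g. rewrite E2_scalr, Heps_unc. ring. lia. }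
    eapply UL_sequence; [|exact C]. intros e He. exists O. intros N _. rewrite Hc. unfold Rdist.
    rewrite Rminus_diag, Rabs_R0. lra. }
  set (c := fun i => a (k + 1 + i)%nat).
  destruct Ha1 as [La HLa]. apply inf_cv in HLa.
  assert (Hc : cv (fun i => Rabs (c i)) (La - rsum (fun j => Rabs (a j)) (k + 1))).
  { apply (cv_shift (fun j => Rabs (a j))). exact HLa. }
  set (Ac := La - rsum (fun j => Rabs (a j)) (k + 1)) in Hc.
  assert (cnn : forall i, 0 <= Rabs (c i)) by (intros; apply Rabs_pos).
  assert (Ac_ge : forall n, rsum (fun i => Rabs (c i)) n <= Ac) by (intros; apply cv_le_lim; auto).
  assert (Ac0 : 0 <= Ac). { specialize (Ac_ge O). simpl in Ac_ge. lra. }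
  assert (tb : forall i m, Rabs (term i m) <= Rabs (c i) * K * Rabs (c m)).
  { intros i m. unfold term, c. rewrite !Rabs_mult. specialize (K0 (Z.of_nat (k + 1 + m) - Z.of_nat (k + 1 + i))%Z).
    pose proof (Rabs_pos (a (k+1+i)%nat)). pose proof (Rabs_pos (a (k+1+m)%nat)).
    pose proof (Rabs_pos (sigma (Z.of_nat (k + 1 + m) - Z.of_nat (k + 1 + i))%Z)). apply Rle_trans with (Rabs (a (k+1+i)%nat) * Rabs (a (k+1+m)%nat) * K).
    apply Rmult_le_compat_l; [apply Rmult_le_pos; auto|exact K0]. right; ring. }
  assert (hcv : forall i, cv (fun m => Rabs (c i) * K * Rabs (c m)) (Rabs (c i) * K * Ac)).
  { intros i. apply cv_scal. exact Hc. }
  assert (hn : forall i n, rsum (fun m => Rabs (c i) * K * Rabs (c m)) n <= Rabs (c i) * K * Ac).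
  { intros i n. rewrite rsum_scal. apply Rmult_le_compat_l; [apply Rmult_le_pos; auto|apply Ac_ge]. }
  assert (tb' : forall i m, Rabs (Rabs (term i m)) <= Rabs (c i) * K * Rabs (c m)) by (intros; rewrite Rabs_Rabsolu; apply tb).
  set (T := fun i => proj1_sig (cv_comp _ _ _ (tb' i) (hcv i))).
  assert (HT : forall i, cv (fun m => Rabs (term i m)) (T i)) by (intros; unfold T; apply proj2_sig).
  assert (Tb : forall i, Rabs (T i) <= (K * Ac) * Rabs (c i)).
  { intros i. replace (K * Ac * Rabs (c i)) with (Rabs (c i) * K * Ac) by ring. rewrite Rabs_right. 
    - apply (lim_le _ _ _ (HT i)). intros n. eapply Rle_trans; [|apply (hn i n)]. apply rsum_le. intros m. apply tb.
    - apply Rle_ge, (lim_ge _ _ _ (HT i)). intros n. apply rsum_nonneg. intros; apply Rabs_pos. }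
  destruct (cv_comp _ _ _ Tb (cv_scal (K * Ac) _ _ Hc)) as [t Ht].
  split. { exists T. split. intros i; apply cv_inf, HT. exists t; apply cv_inf, Ht. }
  set (S := fun i => proj1_sig (cv_comp _ _ _ (tb i) (hcv i))).
  assert (HS : forall i, cv (fun m => term i m) (S i)) by (intros; unfold S; apply proj2_sig).
  assert (Sb : forall i, Rabs (S i) <= (K * Ac) * Rabs (c i)).
  { intros i. replace (K * Ac * Rabs (c i)) with (Rabs (c i) * K * Ac) by ring. replace (S i) with (S i - 0) by ring. apply (lim_bound _ _ _ _ O (HS i)). intros n _.
    rewrite Rminus_0_r. eapply Rle_trans; [apply rsum_abs|]. eapply Rle_trans; [|apply (hn i n)].
    eapply Rle_trans; [apply rsum_le; intros m; apply tb|]. rewrite rsum_scal. right; ring. }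
  destruct (cv_comp _ _ _ Sb (cv_scal (K * Ac) _ _ Hc)) as [D HD].
  exists S, D. split; [intros; apply cv_inf, HS|]. split; [apply cv_inf, HD|].
  assert (rsum_minus : forall f g n, rsum (fun i => f i - g i) n = rsum f n - rsum g n).
  { intros f g n; induction n; simpl; [ring|rewrite IHn; ring]. }
  assert (cst : forall x, Un_cv (fun _ => x) x).
  { intros x e He. exists O. intros. unfold Rdist. rewrite Rminus_diag, Rabs_R0. lra. }
  set (F := fun N => rsum (fun i => rsum (term i) N) N).
  assert (Stail : forall i N, Rabs (S i - rsum (term i) N) <= Rabs (c i) * K * (Ac - rsum (fun m => Rabs (c m)) N)).
  { intros i N. apply (lim_bound _ _ _ _ N (HS i)). intros n Hn.
    replace n with (N + (n - N))%nat by lia.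
    eapply Rle_trans; [apply (rsum_diff_le _ (fun m => Rabs (c i) * K * Rabs (c m))); apply tb|].
    rewrite !rsum_scal. specialize (Ac_ge (N + (n - N))%nat).
    assert (0 <= Rabs (c i) * K) by (apply Rmult_le_pos; auto).
    rewrite <- Rmult_minus_distr_l. apply Rmult_le_compat_l; auto. lra. }
  assert (HF : Un_cv F D).
  { assert (Hw : Un_cv (fun N => K * Ac * (Ac - rsum (fun m => Rabs (c m)) N)) 0).
    { replace 0 with (K * Ac * (Ac - Ac)) by ring. apply CV_mult; [apply cst|]. apply CV_minus; [apply cst|exact Hc]. }
    assert (Hv : Un_cv (fun N => rsum S N - F N) 0).
    { apply (squeeze _ _ ) with (2 := Hw). intros N. unfold F.
      replace (rsum S N - rsum (fun i => rsum (term i) N) N) with (rsum (fun i => S i - rsum (term i) N) N).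
      2:{ rewrite rsum_minus. auto. }
      eapply Rle_trans; [apply rsum_abs|].
      eapply Rle_trans; [apply rsum_le; intros i; apply Stail|].
      assert (0 <= Ac - rsum (fun m => Rabs (c m)) N) by (specialize (Ac_ge N); lra).
      replace (rsum (fun i => Rabs (c i) * K * (Ac - rsum (fun m => Rabs (c m)) N)) N)
        with ((K * (Ac - rsum (fun m => Rabs (c m)) N)) * rsum (fun i => Rabs (c i)) N).
      2:{ rewrite <- rsum_scal. apply rsum_ext. intros; ring. }
      specialize (Ac_ge N). rewrite (Rmult_comm K Ac), (Rmult_assoc Ac), (Rmult_comm Ac).
      apply Rmult_le_compat_l; auto. apply Rmult_le_pos; auto. }
    assert (H := CV_minus _ _ _ _ (HD : Un_cv (fun N => rsum S N) D) Hv).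
    intros e He. destruct (H e He) as [N HN]. exists N. intros n Hn. specialize (HN n Hn).
    unfold Rdist in *. replace (F n - D) with (rsum S n - (rsum S n - F n) - (D - 0)) by ring. exact HN. }
  set (f := fun j : nat => vscal (a j) (X (Z.of_nat k + 1 - Z.of_nat j)%Z)).
  set (P := vsum f (k + 1)).
  assert (EP : err = P).
  { unfold err, Xpred, vopp, vsub. rewrite vscal_assoc. replace (-1 * -1) with 1 by ring. rewrite vscal_1.
    unfold P. replace (k + 1)%nat with (1 + k)%nat by lia. rewrite vsum_split.
    change (vsum f 1) with (vadd vzero (f 0%nat)). rewrite vadd_0. f_equal.
    - unfold f. rewrite Ha0, vscal_1. f_equal. simpl. ring.
    - apply vsum_ext. intros i. unfold f. rewrite (Nat.add_comm 1 i). reflexivity. }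
  rewrite EP.
  set (Q := fun N => vsum (fun i => f (k + 1 + i)%nat) N).
  assert (EQ : forall N, E2 (Q N) (Q N) = F N).
  { intros N. unfold Q. rewrite E2_vsuml. unfold F. apply rsum_ext; intros i _. rewrite E2_vsumr.
    apply rsum_ext; intros m _. unfold f, term. rewrite E2_scall, E2_scalr, cov.
    replace (Z.of_nat k + 1 - Z.of_nat (k+1+i) - (Z.of_nat k + 1 - Z.of_nat (k+1+m)))%Z
      with (Z.of_nat (k+1+m) - Z.of_nat (k+1+i))%Z by ring. ring. }
  set (u := eps (Z.of_nat k + 1)%Z).
  assert (EU : forall N, E2 u (Q N) = 0).
  { intros N. unfold Q. rewrite E2_vsumr, (rsum_ext _ (fun _ => 0)), rsum_zero; auto.
    intros i _. unfold f, u. rewrite E2_scalr, orth; [ring|lia]. }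
  assert (Hu : E2 u u = s2) by apply Heps_var.
  set (e := fun N => vsub u (vsum f (k + 1 + N))).
  assert (He : Un_cv (fun N => E2 (e N) (e N)) 0).
  { specialize (HAR (Z.of_nat k + 1)%Z). unfold L2_series in HAR. apply (Un_cv_shift _ _ (k + 1)) in HAR. exact HAR. }
  assert (Id : forall N, s2 + F N = E2 (e N) (e N) + 2 * E2 (e N) P + E2 P P).
  { intros N. rewrite <- EQ, <- Hu.
    unfold e. rewrite vsum_split. fold P. fold (Q N).
    rewrite !E2_subl, !E2_subr, !E2_addl, !E2_addr.
    rewrite (E2_sym (Q N) P), (E2_sym (Q N) u), (E2_sym P u), EU. ring. }
  assert (L1 : Un_cv (fun N => s2 + F N) (s2 + D)) by (apply CV_plus; [apply cst|exact HF]).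
  assert (L2 : Un_cv (fun N => s2 + F N) (0 + 2 * 0 + E2 P P)).
  { intros eps0 Heps0.
    assert (H := CV_plus _ _ _ _ (CV_plus _ _ _ _ He (CV_mult _ _ _ _ (cst 2) (cont V e P He))) (cst (E2 P P))).
    destruct (H eps0 Heps0) as [N HN]. exists N. intros n Hn. rewrite Id. apply HN; auto. }
  assert (UL := UL_sequence _ _ _ L1 L2). lra.
Qed.
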